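(* Let $R$ be a unital ring, let $\mathcal{F}_1\subseteq\mathcal{F}_2$ be Gabriel filters of right ideals of $R$, let $\Delta=\{\delta_n\}_{n\in\omega}$ be a higher derivation on $R$, let $M$ be a right $R$-module and $D=\{d_n\}_{n\in\omega}$ a higher $\Delta$-derivation on $M$. For $k=1,2$ let $\{d^{(k)}_n\}_{n\in\omega}$ be the (unique) higher $\Delta$-derivation on $M_{\mathcal{F}_k}$ extending $D$, i.e. with $d^{(k)}_n\circ q_k=q_k\circ d_n$ for all $n$. Then these extensions agree: $q_{12}\circ d^{(1)}_n=d^{(2)}_n\circ q_{12}$ for every $n$.
   Context: A Gabriel filter $\mathcal{F}$ corresponds to a hereditary torsion theory with torsion class $\mathcal{T}=\{N\mid \mathrm{ann}(x)\in\mathcal{F}\ \text{for all } x\in N\}$; $\mathcal{T}(M)$ denotes the largest torsion submodule of $M$. The module of quotients $M_{\mathcal{F}}$ is the largest submodule $N$ of the injective envelope $E(M/\mathcal{T}(M))$ with $N/(M/\mathcal{T}(M))$ torsion, and $q_M:M\to M_{\mathcal{F}}$ is the projection $M\to M/\mathcal{T}(M)$ followed by inclusion. Here $q_k=q_M:M\to M_{\mathcal{F}_k}$, and $q_{12}:M_{\mathcal{F}_1}\to M_{\mathcal{F}_2}$ is the canonical map induced by the inclusion $\mathcal{F}_1\subseteq\mathcal{F}_2$, satisfying $q_{12}q_1=q_2$. A higher derivation on $R$ is a family $\{\delta_n\}$ of additive maps with $\delta_0=\mathrm{id}_R$ and $\delta_n(rs)=\sum_{i=0}^n\delta_i(r)\delta_{n-i}(s)$;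 a higher $\Delta$-derivation on a right module $N$ is a family $\{d_n\}$ of additive maps with $d_0=\mathrm{id}_N$ and $d_n(xr)=\sum_{i=0}^n d_i(x)\delta_{n-i}(r)$. Every higher $\Delta$-derivation on $M$ extends uniquely to a higher $\Delta$-derivation on $M_{\mathcal{F}}$ commuting with $q_M$. *)

(* Defs.v *)
(* Right R-modules are modelled as left modules over the
   converse ring R^c, i.e. as [lmodType R^c]; the right action x.r is
   [ract x r := (r : R^c) *: x]. *)
From HB Require Import structures.
From mathcomp Require Import all_boot all_order all_algebra.
Set Implicit Arguments. Unset Strict Implicit. Unset Printing Implicit Defensive.
Import GRing.Theory.
Local Open Scope ring_scope.

Section Defs.
Variable R : pzRingType.

Definition ract (V : lmodType R^c) (x : V) (r : R) : V := (r : R^c) *: x.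

Definition right_ideal (I : R -> Prop) : Prop :=
  [/\ I 0, (forall a b, I a -> I b -> I (a - b)) & (forall a r, I a -> I (a * r))].

Definition colon (I : R -> Prop) (r : R) : R -> Prop := fun s => I (r * s).

(* Gabriel filter (Gabriel topology, Stenstrom VI.5: T1-T4) of right ideals *)
Definition gabriel_filter (F : (R -> Prop) -> Prop) : Prop :=
  (forall I, F I -> right_ideal I) /\
  [/\ F (fun _ => True),
      (forall I J, F I -> right_ideal J -> (forall r, I r -> J r) -> F J),
      (forall I J, F I -> F J -> F (fun r => I r /\ J r)),
      (forall I r, F I -> F (colon I r)) &
      (forall I J, right_ideal I -> F J -> (forall j, J j -> F (colon I j)) -> F I)].

Definition submodule (V : lmodType R^c) (S : V -> Prop) : Prop :=
  [/\ S 0, (forall x y, S x -> S y -> S (x - y)) &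
      (forall x r, S x -> S (ract x r))].

Definition rlinear_on (A B : lmodType R^c) (P : A -> Prop) (f : A -> B) : Prop :=
  (forall x y, P x -> P y -> f (x + y) = f x + f y) /\
  (forall x r, P x -> f (ract x r) = ract (f x) r).

Definition ann (V : lmodType R^c) (x : V) : R -> Prop := fun r => ract x r = 0.

Definition torsion_part (F : (R -> Prop) -> Prop) (V : lmodType R^c) (x : V) : Prop :=
  exists N : V -> Prop, [/\ submodule N, (forall z, N z -> F (ann z)) & N x].

Definition injective_rmod (E : lmodType R^c) : Prop :=
  forall (A : lmodType R^c) (B : A -> Prop) (f : A -> E),
    submodule B -> rlinear_on B f ->
    exists g : A -> E, rlinear_on (fun _ => True) g /\ (forall x, B x -> g x = f x).

(* [q : M -> E] presents E as an injective envelope E(M/T(M)) of M/T(M):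
   q is R-linear with kernel exactly T(M) (so q(M) ~ M/T(M)), E is injective
   and q(M) is an essential submodule of E. *)
Definition quot_envelope (F : (R -> Prop) -> Prop) (M E : lmodType R^c)
    (q : M -> E) : Prop :=
  [/\ rlinear_on (fun _ => True) q,
      (forall x, q x = 0 <-> torsion_part F x),
      injective_rmod E &
      (forall S : E -> Prop, submodule S ->
         (forall y, S y -> (exists x, y = q x) -> y = 0) ->
         forall y, S y -> y = 0)].

(* M_F: the largest submodule N of E with q(M) <= N and N/q(M) F-torsion *)
Definition mod_quot (F : (R -> Prop) -> Prop) (M E : lmodType R^c)
    (q : M -> E) : E -> Prop :=
  fun y => exists N : E -> Prop,
    [/\ submodule N, (forall x, N (q x)),
        (forall z, N z -> F (fun r => exists x, ract z r = q x)) & N y].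

Definition higher_derivation (delta : nat -> R -> R) : Prop :=
  [/\ (forall r, delta 0%N r = r),
      (forall n r s, delta n (r + s) = delta n r + delta n s) &
      (forall n r s, delta n (r * s) =
         \sum_(i < n.+1) delta i r * delta (n - i)%N s)].

(* higher Delta-derivation on the submodule P of V (maps defined on V,
   only their behaviour on P matters) *)
Definition higher_Dderivation (delta : nat -> R -> R) (V : lmodType R^c)
    (P : V -> Prop) (d : nat -> V -> V) : Prop :=
  [/\ (forall x, P x -> d 0%N x = x),
      (forall n x, P x -> P (d n x)),
      (forall n x y, P x -> P y -> d n (x + y) = d n x + d n y) &
      (forall n x r, P x -> d n (ract x r) =
         \sum_(i < n.+1) ract (d i x) (delta (n - i)%N r))].

End Defs.

(* Main.v *)
Require Import Defs.
From mathcomp Require Import all_boot all_order all_algebra.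
Set Implicit Arguments. Unset Strict Implicit. Unset Printing Implicit Defensive.
Import GRing.Theory.
Local Open Scope ring_scope.

Section Aux.
Variable R : pzRingType.

Lemma ractA (V : lmodType R^c) (x : V) (a b : R) :
  ract x (a * b) = ract (ract x a) b.
Proof. by rewrite /ract scalerA. Qed.

Lemma ract0r (V : lmodType R^c) (x : V) : ract x 0 = 0.
Proof. by rewrite /ract scale0r. Qed.
Lemma ractr0 (V : lmodType R^c) (r : R) : ract (0 : V) r = 0.
Proof. by rewrite /ract scaler0. Qed.
Lemma ractBl (V : lmodType R^c) (x : V) (a b : R) :
  ract x (a - b) = ract x a - ract x b.
Proof. by rewrite /ract scalerBl. Qed.
Lemma ractBr (V : lmodType R^c) (x y : V) (r : R) :
  ract (x - y) r = ract x r - ract y r.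
Proof. by rewrite /ract scalerBr. Qed.
Lemma ractDr (V : lmodType R^c) (x y : V) (r : R) :
  ract (x + y) r = ract x r + ract y r.
Proof. by rewrite /ract scalerDr. Qed.

Lemma lin0 (A B : lmodType R^c) (P : A -> Prop) (f : A -> B) :
  rlinear_on P f -> P 0 -> f 0 = 0.
Proof.
move=> [hD _] P0; have := hD 0 0 P0 P0; rewrite addr0 => h.
by apply: (addrI (f 0)); rewrite addr0 -h.
Qed.

Lemma linB (A B : lmodType R^c) (P : A -> Prop) (f : A -> B) :
  rlinear_on P f -> submodule P -> forall x y, P x -> P y -> f (x - y) = f x - f y.
Proof.
move=> hf [P0 PB PR] x y Px Py.
have Pxy := PB _ _ Px Py.
have := (proj1 hf) _ _ Pxy Py; rewrite subrK => ->; by rewrite addrK.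
Qed.

Lemma sub_add (A : lmodType R^c) (P : A -> Prop) :
  submodule P -> forall x y, P x -> P y -> P (x + y).
Proof.
move=> [P0 PB PR] x y Px Py.
have := PB _ _ Px (PB _ _ P0 Py); by rewrite sub0r opprK.
Qed.

Lemma lin_sum (A B : lmodType R^c) (P : A -> Prop) (f : A -> B) (I : Type)
  (s : seq I) (G : I -> A) :
  rlinear_on P f -> submodule P -> (forall i, P (G i)) ->
  f (\sum_(i <- s) G i) = \sum_(i <- s) f (G i).
Proof.
move=> hf hP hG.
have: P (\sum_(i <- s) G i) /\ f (\sum_(i <- s) G i) = \sum_(i <- s) f (G i).
  elim/big_rec2: _ => [|i a b _ [Pa hab]].
    case: (hP) => P0 _ _; split => //; exact: lin0 hf P0.
  split; first by apply: sub_add => //.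
  by rewrite (proj1 hf) // hab.
by case.
Qed.

Variable F : (R -> Prop) -> Prop.
Hypothesis hF : gabriel_filter F.

Lemma F_up I J : F I -> right_ideal J -> (forall r, I r -> J r) -> F J.
Proof. by case: hF => _ [_ h _ _ _]; apply: h. Qed.

Lemma ann_ideal (V : lmodType R^c) (z : V) : right_ideal (ann z).
Proof.
split; rewrite /ann.
- by rewrite ract0r.
- by move=> a b ha hb; rewrite ractBl ha hb subrr.
- by move=> a r ha; rewrite ractA ha ractr0.
Qed.

Lemma Fann_sub (V : lmodType R^c) : submodule (fun z : V => F (ann z)).
Proof.
case: hF => _ [FT _ FI Fc _]; split.
- apply: (F_up FT (ann_ideal 0)) => r _; by rewrite /ann ractr0.
- move=> x y hx hy; apply: (F_up (FI _ _ hx hy) (ann_ideal _)) => r [h1 h2].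
  by rewrite /ann ractBr h1 h2 subrr.
- move=> x r hx; apply: (F_up (Fc _ r hx) (ann_ideal _)) => s.
  by rewrite /colon /ann ractA.
Qed.

Variables (M E : lmodType R^c) (q : M -> E).
Hypothesis hq : rlinear_on (fun _ => True) q.

Lemma q0 : q 0 = 0. Proof. exact: lin0 hq _. Qed.
Lemma qB x y : q (x - y) = q x - q y.
Proof. apply: (linB hq) => //; split => //. Qed.

Definition K (z : E) : R -> Prop := fun r => exists x, ract z r = q x.

Lemma K_ideal z : right_ideal (K z).
Proof.
split; rewrite /K.
- by exists 0; rewrite ract0r q0.
- move=> a b [x hx] [y hy]; exists (x - y); by rewrite ractBl hx hy qB.
- move=> a r [x hx]; exists (ract x r); by rewrite ractA hx (proj2 hq).
Qed.

Definition Pq (z : E) := F (K z).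

Lemma Pq_sub : submodule Pq.
Proof.
case: hF => _ [FT _ FI Fc _]; split; rewrite /Pq.
- apply: (F_up FT (K_ideal 0)) => r _; exists 0; by rewrite ractr0 q0.
- move=> x y hx hy; apply: (F_up (FI _ _ hx hy) (K_ideal _)) => r [[a ha] [b hb]].
  by exists (a - b); rewrite ractBr ha hb qB.
- move=> x r hx; apply: (F_up (Fc _ r hx) (K_ideal _)) => s [a ha].
  by exists a; rewrite -ractA.
Qed.

Lemma mq_Pq y : mod_quot F q y <-> Pq y.
Proof.
split.
- by case=> N [_ _ h Ny]; apply: h.
- move=> hy; exists Pq; split => //; first exact: Pq_sub.
  move=> x; rewrite /Pq; case: hF => _ [FT _ _ _ _].
  apply: (F_up FT (K_ideal _)) => r _; exists (ract x r); by rewrite (proj2 hq).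
Qed.

Lemma mq_sub : submodule (mod_quot F q).
Proof.
case: Pq_sub => a b c; split.
- by apply/mq_Pq.
- by move=> x y /mq_Pq hx /mq_Pq hy; apply/mq_Pq; apply: b.
- by move=> x r /mq_Pq hx; apply/mq_Pq; apply: c.
Qed.

Hypothesis hker : forall x, q x = 0 <-> torsion_part F x.

Lemma tors_q x : F (ann (q x)) -> q x = 0.
Proof.
move=> h; apply/hker.
have hx: F (ann x).
  case: hF => _ [_ _ _ _ T4]; apply: (T4 _ _ (ann_ideal x) h) => j hj.
  have : q (ract x j) = 0 by rewrite (proj2 hq) // hj.
  move/hker=> [N [_ hN Nx]].
  apply: (F_up (hN _ Nx)).
    split; rewrite /colon /ann.
    + by rewrite mulr0 ract0r.
    + by move=> a b ha hb; rewrite mulrBr ractBl ha hb subrr.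
    + by move=> a r ha; rewrite mulrA ractA ha ractr0.
  by move=> r; rewrite /colon /ann ractA.
exists (fun z => F (ann z)); split => //; exact: Fann_sub.
Qed.
End Aux.

Theorem corollary4p1 (R : pzRingType)
    (F1 F2 : (R -> Prop) -> Prop)
    (hF1 : gabriel_filter F1) (hF2 : gabriel_filter F2)
    (hF12 : forall I, F1 I -> F2 I)
    (delta : nat -> R -> R) (hdelta : higher_derivation delta)
    (M : lmodType R^c) (d : nat -> M -> M)
    (hd : higher_Dderivation delta (fun _ => True) d)
    (E1 : lmodType R^c) (q1 : M -> E1) (hq1 : quot_envelope F1 q1)
    (E2 : lmodType R^c) (q2 : M -> E2) (hq2 : quot_envelope F2 q2)
    (q12 : E1 -> E2)
    (hq12_maps : forall y, mod_quot F1 q1 y -> mod_quot F2 q2 (q12 y))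
    (hq12_lin : rlinear_on (mod_quot F1 q1) q12)
    (hq12 : forall x, q12 (q1 x) = q2 x)
    (d1 : nat -> E1 -> E1)
    (hd1 : higher_Dderivation delta (mod_quot F1 q1) d1)
    (hd1q : forall n x, d1 n (q1 x) = q1 (d n x))
    (d2 : nat -> E2 -> E2)
    (hd2 : higher_Dderivation delta (mod_quot F2 q2) d2)
    (hd2q : forall n x, d2 n (q2 x) = q2 (d n x)) :
  forall n y, mod_quot F1 q1 y -> q12 (d1 n y) = d2 n (q12 y).
Proof.
case: hq1 => q1lin q1ker _ q1ess.
case: hq2 => q2lin q2ker _ q2ess.
have sub1 := mq_sub hF1 q1lin.
case: hd1 => _ hd1P _ hd1R.
case: hd2 => _ hd2P _ hd2R.
case: (hdelta) => hdel0 _ _.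
have [_ q12R] := hq12_lin.
have sub1R : forall x r, mod_quot F1 q1 x -> mod_quot F1 q1 (ract x r).
  by case: sub1.
move=> n; elim/ltn_ind: n => n IH y Hy.
set z := q12 (d1 n y) - d2 n (q12 y).
have hz : forall r, ract z r = q12 (d1 n (ract y r)) - d2 n (q12 (ract y r)).
  move=> r.
  rewrite hd1R // q12R // hd2R; last exact: hq12_maps.
  rewrite (lin_sum _ hq12_lin sub1); last by move=> i; apply: sub1R; apply: hd1P.
  rewrite (eq_bigr (fun i : 'I_n.+1 => ract (q12 (d1 i y)) (delta (n - i)%N r)));
    last by move=> i _; rewrite q12R //; apply: hd1P.
  rewrite !big_ord_recr /= subnn hdel0.
  rewrite (eq_bigr (fun i : 'I_n => ract (d2 i (q12 y)) (delta (n - i)%N r)));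
    last by move=> i _; rewrite IH.
  by rewrite /z ractBr opprD addrA (addrC (\sum_(i < n) _)) addrK.
have Hz : forall r, (exists x, ract y r = q1 x) -> ract z r = 0.
  by move=> r [x hx]; rewrite hz hx hd1q !hq12 hd2q subrr.
have Fz : F2 (ann z).
  have := (mq_Pq hF1 q1lin y).1 Hy => /hF12 HK.
  apply: (F_up hF2 HK (ann_ideal z)) => r hr; exact: Hz.
apply/eqP; rewrite -subr_eq0; apply/eqP.
apply: (q2ess _ (Fann_sub hF2 E2)) Fz => w Fw [x ewx].
by rewrite ewx; apply: (tors_q hF2 q2lin q2ker); rewrite -ewx.
Qed.
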